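(* Let $(L,\wedge,\vee,0,1)$ be a bounded lattice with additive Nakano mosaic $(L,\boxplus,0)$, where $x\boxplus y:=\{z\in L\mid x\vee y=x\vee z=z\vee y\}$. Then for all $x,y\in L$, \[ (x\boxplus(x\boxplus y))\cap((x\boxplus y)\boxplus y)\subseteq x\boxplus y. \]
   Context: For $u\in L$ and subsets $X,Y\subseteq L$, $u\boxplus X:=\bigcup_{v\in X}u\boxplus v$ and $X\boxplus u:=\bigcup_{v\in X}v\boxplus u$. *)

(* Defs.v *)
From HB Require Import structures.
From mathcomp Require Import all_boot all_order.
Set Implicit Arguments. Unset Strict Implicit. Unset Printing Implicit Defensive.
Import Order.TTheory.
Local Open Scope order_scope.

Definition nakano {d : Order.disp_t} {L : latticeType d} (x y : L) : L -> Prop :=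
  fun z => x `|` y = x `|` z /\ x `|` z = z `|` y.

Definition nakanoL {d : Order.disp_t} {L : latticeType d} (u : L) (X : L -> Prop)
  : L -> Prop := fun z => exists v, X v /\ nakano u v z.

Definition nakanoR {d : Order.disp_t} {L : latticeType d} (X : L -> Prop) (u : L)
  : L -> Prop := fun z => exists v, X v /\ nakano v u z.

(* Main.v *)
Require Import Defs.
From mathcomp Require Import all_boot all_order.

Theorem mainTheorem15 (d : Order.disp_t) (L : tbLatticeType d) (x y : L) :
  forall z : L,
    nakanoL x (nakano x y) z -> nakanoR (nakano x y) y z -> nakano x y z.
Proof.
  move=> z [v [[H1 H2] [H3 H4]]] [w [[H5 H6] [H7 H8]]].
  split.
  - by rewrite H1 H3.
  - by rewrite -H8 -H7 -H6 -H5 H1 H3.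
Qed.
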